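(* Let $x$ be a $\theta$-cyclic point and let $U\subseteq V_n$ be a minimal critical cut of $G_x$, i.e. $U$ is a critical cut and no $S\subsetneq U$ is a critical cut of $G_x$. Then $G_x^U$ (with the point $x^U$) contains no critical cut.
   Context: $\mathrm{SUBT}(K_n)=\{x\in[0,1]^{E_n}: x(\delta(\{i\}))=2\ \forall i,\ x(\delta(U))\ge2\ \forall\,\emptyset\ne U\subsetneq V_n\}$ where $K_n$ is the complete graph on $V_n=\{1,\ldots,n\}$ with edge set $E_n$ and $\delta(U)$ is the set of edges with exactly one endpoint in $U$. $G_x=(V_n,E_x)$, $E_x=\{e:x_e>0\}$. A $\theta$-cyclic point ($0<\theta\le\frac12$) is $x\in\mathrm{SUBT}(K_n)\cap\{0,\theta,1-\theta,1\}^{E_n}$ with $G_x$ of maximum degree at most 3 and every vertex incident to an edge of $x$-value 1. A cut $U$ of a graph with vertex set $V$ is proper if $|U|\ge2$ and $|V\setminus U|\ge2$. A critical cut is a proper cut $U$ with $|\delta(U)|=3$, exactly one edge of $\delta(U)$ of $x$-value 1, and the edges of $\delta(U)$ having pairwise distinct endpoints in $U$ and pairwise distinct endpoints outside $U$. $G_x^U$ is obtained from $G_x$ by identifying all vertices of $V_n\setminus U$ into a single vertex $v_{\overline U}$ and deleting loops; $x^U$ assigns each edge of $G_x^U$ its $x$-value. *)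

(* Defs.v *)
From HB Require Import structures.
From mathcomp Require Import all_boot all_order all_algebra.
Set Implicit Arguments. Unset Strict Implicit. Unset Printing Implicit Defensive.
Import Order.TTheory GRing.Theory Num.Theory.
Local Open Scope ring_scope.

(* Vertex set V_n = 'I_n.  An (undirected) edge {i,j} of K_n is represented
   by the ordered pair (i,j) with i < j. *)
Definition E_n (n : nat) : {set 'I_n * 'I_n} := [set e : 'I_n * 'I_n | (e.1 < e.2)%N].

Definition deltaK (n : nat) (U : {set 'I_n}) : {set 'I_n * 'I_n} :=
  [set e in E_n n | (e.1 \in U) != (e.2 \in U)].

(* SUBT(K_n); x is given on all pairs, only its values on E_n matter. *)
Definition in_SUBT (R : numDomainType) (n : nat) (x : 'I_n * 'I_n -> R) : Prop :=
  [/\ (forall e, e \in E_n n -> 0 <= x e <= 1),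
      (forall i : 'I_n, \sum_(e in deltaK [set i]) x e = 2) &
      (forall U : {set 'I_n}, U != set0 -> U != setT ->
          2 <= \sum_(e in deltaK U) x e)].

Definition E_x (R : numDomainType) (n : nat) (x : 'I_n * 'I_n -> R) :
  {set 'I_n * 'I_n} := [set e in E_n n | 0 < x e].

Definition theta_cyclic (R : numDomainType) (n : nat) (theta : R)
  (x : 'I_n * 'I_n -> R) : Prop :=
  [/\ 0 < theta /\ theta <= 2^-1, in_SUBT x,
      (forall e, e \in E_n n ->
         [|| x e == 0, x e == theta, x e == 1 - theta | x e == 1]),
      (forall i : 'I_n, (#|[set e in E_x x | (e.1 == i) || (e.2 == i)]| <= 3)%N) &
      (forall i : 'I_n, exists2 e, e \in E_x x & ((e.1 == i) || (e.2 == i)) && (x e == 1))].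

(* Generic finite multigraph: vertex set [vs] in a finType [VT], edge set [es]
   in a finType [ET], endpoint map [ends], edge values [w]. *)
Section Generic.
Variables (R : numDomainType) (VT ET : finType).
Variables (vs : {set VT}) (es : {set ET}) (ends : ET -> VT * VT) (w : ET -> R).

Definition cut_edges (W : {set VT}) : {set ET} :=
  [set e in es | ((ends e).1 \in W) != ((ends e).2 \in W)].

Definition end_in (W : {set VT}) (e : ET) : VT :=
  if (ends e).1 \in W then (ends e).1 else (ends e).2.
Definition end_out (W : {set VT}) (e : ET) : VT :=
  if (ends e).1 \in W then (ends e).2 else (ends e).1.

Definition proper_cut (W : {set VT}) : Prop :=
  [/\ W \subset vs, (2 <= #|W|)%N & (2 <= #|vs :\: W|)%N].

Definition critical_cut (W : {set VT}) : Prop :=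
  [/\ proper_cut W,
      #|cut_edges W| = 3%N,
      #|[set e in cut_edges W | w e == 1]| = 1%N,
      {in cut_edges W &, injective (end_in W)} &
      {in cut_edges W &, injective (end_out W)}].
End Generic.

Definition crit_Gx (R : numDomainType) (n : nat) (x : 'I_n * 'I_n -> R)
  (W : {set 'I_n}) : Prop :=
  critical_cut [set: 'I_n] (E_x x) id x W.

(* G_x^U : vertices of V_n \ U are identified to the single vertex [None];
   vertices of U are [Some i].  Edges are the edges of G_x not having both
   endpoints outside U (those become loops and are deleted); an edge keeps its
   x-value. *)
Definition contr (n : nat) (U : {set 'I_n}) (i : 'I_n) : option 'I_n :=
  if i \in U then Some i else None.

Definition verts_GxU (n : nat) (U : {set 'I_n}) : {set option 'I_n} :=
  [set contr U i | i : 'I_n].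

Definition edges_GxU (R : numDomainType) (n : nat) (x : 'I_n * 'I_n -> R)
  (U : {set 'I_n}) : {set 'I_n * 'I_n} :=
  [set e in E_x x | (e.1 \in U) || (e.2 \in U)].

Definition ends_GxU (n : nat) (U : {set 'I_n}) (e : 'I_n * 'I_n) :
  option 'I_n * option 'I_n := (contr U e.1, contr U e.2).

Definition crit_GxU (R : numDomainType) (n : nat) (x : 'I_n * 'I_n -> R)
  (U : {set 'I_n}) (W : {set option 'I_n}) : Prop :=
  critical_cut (verts_GxU U) (edges_GxU x U) (ends_GxU U) x W.

(* Main.v *)
Require Import Defs.
From HB Require Import structures.
From mathcomp Require Import all_boot all_order all_algebra.
Import Order.TTheory GRing.Theory Num.Theory.
Local Open Scope ring_scope.

Section Aux.
Variables (R : realFieldType) (n : nat) (x : 'I_n * 'I_n -> R) (U : {set 'I_n}).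

Lemma cut_eq (S : {set 'I_n}) (W : {set option 'I_n}) (b : bool) :
  S \subset U -> (forall i, (contr U i \in W) = ((i \in S) != b)) ->
  cut_edges (edges_GxU x U) (ends_GxU U) W =
  cut_edges (E_x x) id S.
Proof.
move=> sSU hW; apply/setP => e; rewrite !inE /ends_GxU /= !hW.
case h1: (e.1 \in S); case h2: (e.2 \in S);
  rewrite ?(subsetP sSU _ h1) ?(subsetP sSU _ h2) ?orbT ?andbT ?andbF //=;
  by case: (b); rewrite ?andbF ?andbT.
Qed.

Lemma end_in_eq (S : {set 'I_n}) (W : {set option 'I_n}) (b : bool) e :
  (forall i, (contr U i \in W) = ((i \in S) != b)) ->
  end_in (ends_GxU U) W e =
  contr U (if b then end_out id S e else end_in id S e).
Proof.
move=> hW; rewrite /end_in /end_out /ends_GxU /= hW.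
by case: (b); case: (e.1 \in S).
Qed.

Lemma end_out_eq (S : {set 'I_n}) (W : {set option 'I_n}) (b : bool) e :
  (forall i, (contr U i \in W) = ((i \in S) != b)) ->
  end_out (ends_GxU U) W e =
  contr U (if b then end_in id S e else end_out id S e).
Proof.
move=> hW; rewrite /end_in /end_out /ends_GxU /= hW.
by case: (b); case: (e.1 \in S).
Qed.

Lemma aux1 (A : {set option 'I_n}) : A \subset verts_GxU U -> (2 <= #|A|)%N ->
  exists2 i, i \in U & Some i \in A.
Proof.
move=> sA /card_gt1P [v1 [v2 [h1 h2 hne]]].
have [v [hv hvN]] : exists v, v \in A /\ v != None.
  case: v1 h1 hne => [i|] h1 hne; first by exists (Some i).
  by exists v2; split => //; rewrite eq_sym.
case: v hv hvN => [i|] // hv _; exists i => //.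
move: (subsetP sA _ hv) => /imsetP [j _]; rewrite /contr.
by case: ifP => // jU [->].
Qed.

Lemma aux2 (A : {set option 'I_n}) : A \subset verts_GxU U -> None \notin A ->
  (#|A| <= #|[set i in U | Some i \in A]|)%N.
Proof.
move=> sA hN.
rewrite -(card_imset [set i in U | Some i \in A] (@Some_inj _)); apply: subset_leq_card.
apply/subsetP => v hv; case: v hv => [i|] hv; last by rewrite hv in hN.
apply/imsetP; exists i => //; rewrite inE hv andbT.
move: (subsetP sA _ hv) => /imsetP [j _]; rewrite /contr.
by case: ifP => // jU [->].
Qed.
End Aux.
Arguments aux1 {n U A}.
Arguments end_in_eq {n U S W b} e.
Arguments end_out_eq {n U S W b} e.
Arguments aux2 {n U A}.

Theorem mainTheorem11 (R : realFieldType) (n : nat) (theta : R)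
  (x : 'I_n * 'I_n -> R) (U : {set 'I_n}) :
  theta_cyclic theta x ->
  crit_Gx x U ->
  (forall S : {set 'I_n}, S \proper U -> ~ crit_Gx x S) ->
  forall W : {set option 'I_n}, ~ crit_GxU x U W.
Proof.
move=> _ [[_ U2 U2c] _ _ _ _] Hmin W [[Wsub W2 W2c] Hc3 H1 Hin Hout].
pose S := [set i in U | (Some i \in W) != (None \in W)].
have hW i : (contr U i \in W) = ((i \in S) != (None \in W)).
  rewrite /contr inE; case: (i \in U) => /=.
    by case: (Some i \in W); case: (None \in W).
  by case: (None \in W).
have sSU : S \subset U by apply/subsetP => i; rewrite inE => /andP[].
have hcut := @cut_eq R n x U S W _ sSU hW.
have [S2 [i iU iS]] : (2 <= #|S|)%N /\ exists2 i, i \in U & i \notin S.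
  case hb: (None \in W).
  - have sA : verts_GxU U :\: W \subset verts_GxU U by apply: subsetDl.
    have hN : None \notin verts_GxU U :\: W by rewrite inE hb.
    split.
      apply: leq_trans W2c _; apply: leq_trans (aux2 sA hN) _.
      apply: subset_leq_card; apply/subsetP => i; rewrite !inE hb.
      by case/andP => -> /andP [] /negbTE ->.
    have [i iU iW] := aux1 Wsub W2; exists i => //.
    by rewrite inE iW hb andbF.
  - have hN : None \notin W by rewrite hb.
    split.
      apply: leq_trans W2 _; apply: leq_trans (aux2 Wsub hN) _.
      apply: subset_leq_card; apply/subsetP => i; rewrite !inE hb.
      by case/andP => -> ->.
    have [i iU iW] := aux1 (subsetDl _ _) W2c; exists i => //.
    by move: iW; rewrite !inE hb => /andP [] /negbTE ->; rewrite andbF.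
apply: (Hmin S).
  by apply/properP; split => //; exists i.
split.
- split => //; rewrite ?subsetT //.
  apply: leq_trans U2c _; apply: subset_leq_card; exact: setDS.
- by rewrite -hcut.
- by rewrite -hcut.
- move=> e1 e2 h1 h2 E; rewrite -hcut in h1 h2.
  case hb: (None \in W).
  + apply: Hout => //; rewrite !(end_out_eq _ hW) hb /=.
    by rewrite /= in E; rewrite E.
  + apply: Hin => //; rewrite !(end_in_eq _ hW) hb /=.
    by rewrite /= in E; rewrite E.
- move=> e1 e2 h1 h2 E; rewrite -hcut in h1 h2.
  case hb: (None \in W).
  + apply: Hin => //; rewrite !(end_in_eq _ hW) hb /=.
    by rewrite /= in E; rewrite E.
  + apply: Hout => //; rewrite !(end_out_eq _ hW) hb /=.
    by rewrite /= in E; rewrite E.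
Qed.
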